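(* Let $a>0$, $\epsilon>0$, and let $\Xi'\subseteq\Xi^+$ be a finite nonempty set. Put $\mathcal{A}'=\{\xi\in\Xi:\sum_{x\in\mathcal{X}}H_A(\mu,x)\xi(x)\ge a\ \forall\mu\in\Xi'\}$ and $\mathcal{A}=\{\xi\in\Xi^+:\phi_A(\xi)\ge a\}$. Let $(\xi',t')$ be an optimal solution of the linear program: maximize $t$ over $\xi\in\mathcal{A}'$, $t\in\mathbb{R}$, subject to $\sum_{x\in\mathcal{X}}H_D(\mu,x)\xi(x)\ge t$ for all $\mu\in\Xi'$. Then $\mathcal{A}\subseteq\mathcal{A}'$ and $\sup_{\xi\in\mathcal{A}}\phi_D(\xi)\le t'$. Consequently, if $\xi'\in\Xi^+$, $\phi_A(\xi')\ge a$ and $t'-\phi_D(\xi')<\epsilon$, then $\xi'\in\mathcal{A}$ and $\phi_D(\xi')>\sup_{\xi\in\mathcal{A}}\phi_D(\xi)-\epsilon$.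
   Context: $\mathcal{X}$ finite, $f:\mathcal{X}\to\mathbb{R}^p$, $\Xi$ the probability measures on $\mathcal{X}$, $M(\xi)=\sum_x f(x)f^\top(x)\xi(x)$, $\Xi^+=\{\mu\in\Xi: M(\mu)\text{ nonsingular}\}$. $\phi_D(\xi)=\det^{1/p}M(\xi)$ and $\phi_A(\xi)=1/\mathrm{tr}M^{-1}(\xi)$ for $\xi\in\Xi^+$. $H_D(\mu,x)=\frac{\det^{1/p}[M(\mu)]}{p}f^\top(x)M^{-1}(\mu)f(x)$ and $H_A(\mu,x)=\|M^{-1}(\mu)f(x)\|^2/[\mathrm{tr}M^{-1}(\mu)]^2$ for $\mu\in\Xi^+$. *)

(* Defs.v *)
From HB Require Import structures.
From mathcomp Require Import all_boot all_order all_algebra.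
Set Implicit Arguments. Unset Strict Implicit. Unset Printing Implicit Defensive.
Import Order.TTheory GRing.Theory Num.Theory.
Local Open Scope ring_scope.

Fact rootr_subproof (R : rcfType) (n : nat) (x : R) :
  exists2 y, 0 <= y & (if 0 <= x then y ^+ n.+1 == x else y == 0) : bool.
Proof.
case x_ge0: (0 <= x); last by exists 0.
have le0x1: 0 <= x + 1 by rewrite -nnegrE rpredD ?rpred1.
have [|y /andP[y_ge0 _]] := @poly_ivt _ (('X ^+ n.+1 : {poly R}) - x%:P) _ _ le0x1.
  rewrite !hornerE -subr_ge0 add0r expr0n /= sub0r opprK x_ge0 /=.
  rewrite subr_ge0 exprS.
  have h1 : 1 <= (x + 1) ^+ n by rewrite exprn_ege1 // lerDr.
  have : (x + 1) * 1 <= (x + 1) * (x + 1) ^+ n by rewrite ler_wpM2l.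
  rewrite mulr1; apply: le_trans; by rewrite lerDl.
by rewrite rootE !hornerE subr_eq0; exists y.
Qed.

(* rootr n x = the nonnegative n-th root of x, for n >= 1 and x >= 0
   (0 in the degenerate cases n = 0 or x < 0). *)
Definition rootr (R : rcfType) (n : nat) (x : R) : R :=
  if n is m.+1 then s2val (sig2W (@rootr_subproof R m x)) else 0.

Section Design.
Variables (R : rcfType) (p : nat) (X : finType) (f : X -> 'cV[R]_p).

Definition is_design (xi : {ffun X -> R}) : Prop :=
  (forall x, 0 <= xi x) /\ \sum_(x : X) xi x = 1.

Definition infoM (xi : {ffun X -> R}) : 'M[R]_p :=
  \sum_(x : X) xi x *: (f x *m (f x)^T).

Definition is_design_plus (xi : {ffun X -> R}) : Prop :=
  is_design xi /\ infoM xi \in unitmx.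

Definition phiD (xi : {ffun X -> R}) : R := rootr p (\det (infoM xi)).
Definition phiA (xi : {ffun X -> R}) : R := 1 / \tr (invmx (infoM xi)).

Definition sqnorm (v : 'cV[R]_p) : R := \sum_(i < p) v i 0 ^+ 2.

Definition HD (mu : {ffun X -> R}) (x : X) : R :=
  rootr p (\det (infoM mu)) / p%:R * ((f x)^T *m invmx (infoM mu) *m f x) 0 0.
Definition HA (mu : {ffun X -> R}) (x : X) : R :=
  sqnorm (invmx (infoM mu) *m f x) / (\tr (invmx (infoM mu))) ^+ 2.

(* A' (depends on the finite set Xi', given as a sequence S) *)
Definition in_Aprime (a : R) (S : seq {ffun X -> R}) (xi : {ffun X -> R}) : Prop :=
  is_design xi /\ forall mu, mu \in S -> \sum_(x : X) HA mu x * xi x >= a.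

Definition in_A (a : R) (xi : {ffun X -> R}) : Prop :=
  is_design_plus xi /\ phiA xi >= a.

Definition LP_feasible (a : R) (S : seq {ffun X -> R}) (xi : {ffun X -> R}) (t : R) : Prop :=
  in_Aprime a S xi /\ forall mu, mu \in S -> \sum_(x : X) HD mu x * xi x >= t.

Definition LP_optimal (a : R) (S : seq {ffun X -> R}) (xi : {ffun X -> R}) (t : R) : Prop :=
  LP_feasible a S xi t /\ forall xi2 t2, LP_feasible a S xi2 t2 -> t2 <= t.

End Design.

(* Main.v *)
Require Import Defs.
From HB Require Import structures.
From mathcomp Require Import all_boot all_order all_algebra.
From mathcomp Require Import ring lra.
Import Order.TTheory GRing.Theory Num.Theory.
Local Open Scope ring_scope.
Set Implicit Arguments. Unset Strict Implicit.
Lemma qform_block (R : rcfType) n (c : R) (b : 'cV[R]_n) (D : 'M[R]_n) (s : R) (w : 'cV[R]_n) :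
 ((col_mx (s%:M) w)^T *m block_mx c%:M b^T b D *m col_mx (s%:M) w) 0 0
  = s ^+ 2 * c + (s * (b^T *m w) 0 0) *+ 2 + (w^T *m D *m w) 0 0.
Proof.
rewrite tr_col_mx tr_scalar_mx mul_row_block mul_row_col !mulmxDl.
rewrite !mul_scalar_mx !mul_mx_scalar !scalemxAl !mxE eqxx mulr1n.
have E1 : \sum_j (s *: w^T) 0 j * b j 0 = s * \sum_j b^T 0 j * w j 0.
  by rewrite mulr_sumr; apply eq_bigr => j _; rewrite !mxE; ring.
have E2 : \sum_j (s *: b^T) 0 j * w j 0 = s * \sum_j b^T 0 j * w j 0.
  by rewrite mulr_sumr; apply eq_bigr => j _; rewrite !mxE; ring.
rewrite E1 E2 mulr2n; ring.
Qed.

Lemma lin_zero (R : rcfType) (b d : R) : 0 <= b -> (forall s, 0 <= s * b *+ 2 + d) -> b = 0.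
Proof.
move=> b0 H; apply/eqP; apply/negPn/negP => bn0.
have := H (-(d+1) / (b *+ 2)).
have -> : -(d+1) / (b *+ 2) * b *+ 2 = -(d+1).
  by rewrite -mulrnAr -mulrA mulVf ?mulr1 // mulrn_eq0 negb_or bn0.
lra.
Qed.

Definition psd (R : rcfType) n (C : 'M[R]_n) :=
  C^T = C /\ forall v : 'cV[R]_n, 0 <= (v^T *m C *m v) 0 0.

Lemma LDL (R : rcfType) n (C : 'M[R]_n) : psd C ->
  exists (L : 'M[R]_n) (d : 'rV[R]_n),
    [/\ is_trig_mx L, forall i, L i i = 1, forall i, 0 <= d 0 i
      & C = L *m diag_mx d *m L^T].
Proof.
elim: n C => [|n IH] C [Csym Cpsd].
  exists 1%:M, 0; split.
  - by apply/is_trig_mxP => -[].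
  - by case.
  - by case.
  - by apply/matrixP => -[].
pose C' : 'M[R]_(1 + n) := C.
set c := C 0 0.
set b := dlsubmx C'.
set D := drsubmx C'.
have Cul : ulsubmx C' = c%:M.
  apply/matrixP => i j; rewrite !ord1 !mxE /=.
  by congr (C _ _); apply: val_inj.
have Cur : ursubmx C' = b^T by rewrite /b trmx_dlsub Csym.
have CE : C' = block_mx c%:M b^T b D by rewrite -Cul -Cur submxK.
have Dsym : D^T = D by rewrite /D trmx_drsub Csym.
have Cq s (w : 'cV[R]_n) : 0 <= s ^+ 2 * c + (s * (b^T *m w) 0 0) *+ 2 + (w^T *m D *m w) 0 0.
  by move: (Cpsd (col_mx s%:M w)); rewrite -[C]/C' CE qform_block.
have c0 : 0 <= c.
  by have := Cq 1 0; rewrite mulmx0 trmx0 !mul0mx !mxE expr1n !mul1r mul0rn !addr0.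
have cb : c *: (c^-1 *: b) = b.
  have [ce|cn0] := eqVneq c 0; last by rewrite scalerA mulfV ?scale1r.
  rewrite ce scale0r.
  have bb : (b^T *m b) 0 0 = 0.
    apply: (lin_zero (d := (b^T *m D *m b) 0 0)).
      by rewrite mxE; apply: sumr_ge0 => i _; rewrite mxE -expr2 sqr_ge0.
    by move=> s; have := Cq s b; rewrite ce mulr0 add0r.
  apply/matrixP => i j; rewrite ord1 mxE.
  move: bb; rewrite mxE => /eqP; rewrite psumr_eq0 => [/allP/(_ i)|k _].
    by rewrite mem_index_enum mxE -expr2 sqrf_eq0 => /(_ isT) /eqP.
  by rewrite mxE -expr2 sqr_ge0.
pose S := D - c^-1 *: (b *m b^T).
pose K : 'M[R]_(1 + n, n) := col_mx (- (c^-1 *: b^T)) 1%:M.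
have KCK : K^T *m C' *m K = S.
  have KT : (- (c^-1 *: b^T))^T = - (c^-1 *: b).
    by rewrite linearN /= linearZ /= trmxK.
  rewrite CE /K tr_col_mx trmx1 KT mul_row_block mul_row_col.
  rewrite !mul1mx mul_mx_scalar.
  have -> : c *: - (c^-1 *: b) + b = 0.
    by rewrite scalerN cb addNr.
  by rewrite mul0mx add0r mulmx1 mulNmx -scalemxAl /S addrC.
have Spsd : psd S.
  split.
    by rewrite /S linearB /= linearZ /= trmx_mul trmxK Dsym.
  move=> w; rewrite -KCK.
  have := Cpsd (K *m w).
  by rewrite trmx_mul -!mulmxA.
have [L' [d' [L'trig L'1 d'0 SE]]] := IH S Spsd.
pose L : 'M[R]_(1 + n) := block_mx 1%:M 0 (c^-1 *: b) L'.
pose d : 'rV[R]_(1 + n) := row_mx (c%:M : 'rV_1) d'.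
have Ltrig : is_trig_mx L.
  by rewrite is_trig_block_mx // eqxx L'trig is_diag_mx_is_trig // mx11_is_diag.
have L1 (i : 'I_(1 + n)) : L i i = 1.
  have [j -> | j ->] := split_ordP i.
    by rewrite block_mxEul ord1 mxE.
  by rewrite block_mxEdr L'1.
have d0 (i : 'I_(1 + n)) : 0 <= d 0 i.
  have [j -> | j ->] := split_ordP i.
    by rewrite row_mxEl ord1 mxE.
  by rewrite row_mxEr d'0.
have dc : diag_mx (c%:M : 'rV_1) = c%:M.
  by apply/matrixP => i j; rewrite !ord1 !mxE.
have LE : C' = L *m diag_mx d *m L^T.
  rewrite CE /L /d diag_mx_row dc tr_block_mx trmx1 trmx0 !mulmx_block.
  rewrite !(mul1mx, mulmx1, mul0mx, mulmx0, addr0, add0r).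
  rewrite mul_scalar_mx mul_mx_scalar cb.
  have -> : c *: (c^-1 *: b)^T = b^T.
    transitivity (c *: (c^-1 *: b))^T; first by rewrite [RHS]linearZ.
    by rewrite cb.
  rewrite -SE /S linearZ /= -scalemxAr addrC subrK.
  by [].
by exists L, d; split.
Qed.

Lemma psd_det_tr (R : rcfType) p (C : 'M[R]_p) : (0 < p)%N -> psd C ->
  [/\ 0 <= \det C, 0 <= \tr C & \det C <= (\tr C / p%:R) ^+ p].
Proof.
move=> p0 /LDL [L [d [Ltrig L1 d0 CE]]].
have detC : \det C = \prod_i d 0 i.
  rewrite CE !det_mulmx det_tr det_diag det_trig //.
  have P1 : \prod_(i < p) L i i = 1 by rewrite big1 // => i _; apply: L1.
  by rewrite P1 mul1r mulr1.
have Cii i : d 0 i <= C i i.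
  rewrite CE mul_mx_diag mxE (bigD1 i) //= !mxE L1 mulr1 mul1r lerDl.
  apply: sumr_ge0 => k _; rewrite !mxE.
  by rewrite mulrC mulrA mulr_ge0 // -expr2 sqr_ge0.
have sd : \sum_i d 0 i <= \tr C by rewrite /mxtrace; apply: ler_sum => i _; apply: Cii.
have sd0 : 0 <= \sum_i d 0 i by apply: sumr_ge0.
have pr0 : 0 <= \prod_i d 0 i by apply: prodr_ge0.
split; rewrite ?detC //; first exact: le_trans sd.
have := @leif_AGM R 'I_p predT (fun i => d 0 i) (fun i _ => d0 i).
rewrite card_ord => /leif_le H.
apply: (le_trans H); apply: lerXn2r; rewrite ?nnegrE.
- by apply: divr_ge0.
- by apply: divr_ge0 => //; exact: le_trans sd.
- by apply: ler_wpM2r; rewrite ?invr_ge0.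
Qed.

Lemma det_amgm (R : rcfType) p (A B : 'M[R]_p) : (0 < p)%N -> psd A -> psd B ->
  A \in unitmx ->
  [/\ 0 < \det A, 0 <= \det B, 0 <= \tr (invmx A *m B)
    & \det B <= \det A * (\tr (invmx A *m B) / p%:R) ^+ p].
Proof.
move=> p0 Apsd [Bsym Bpsd] Au.
have [L [d [_ _ d0 AE]]] := LDL Apsd.
pose s : 'rV[R]_p := \row_i Num.sqrt (d 0 i).
pose K := L *m diag_mx s.
have AK : A = K *m K^T.
  rewrite AE /K trmx_mul tr_diag_mx !mulmxA -(mulmxA L (diag_mx s)) mulmx_diag.
  congr (_ *m diag_mx _ *m _); apply/rowP => i; rewrite !mxE -expr2 sqr_sqrtr //.
have Ku : K \in unitmx by move: Au; rewrite AK unitmx_mul => /andP[].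
have detA : \det A = \det K ^+ 2 by rewrite AK det_mulmx det_tr expr2.
have detK0 : \det K != 0 by rewrite -unitfE -unitmxE.
pose Ki := invmx K.
pose C := Ki *m B *m Ki^T.
have Cpsd : psd C.
  split; first by rewrite /C !trmx_mul trmxK Bsym mulmxA.
  move=> v; have := Bpsd (Ki^T *m v).
  by rewrite /C trmx_mul trmxK !mulmxA.
have [dC trC le] := psd_det_tr p0 Cpsd.
have detB : \det B = \det A * \det C.
  rewrite /C !det_mulmx det_tr det_inv detA.
  set k := \det K.
  have -> : k ^+ 2 * (k^-1 * \det B / k) = (k * k^-1) * (k * k^-1) * \det B by ring.
  by rewrite mulfV // !mul1r.
have iA : invmx A = Ki^T *m Ki.
  have H : A *m (Ki^T *m Ki) = 1%:M.
    rewrite AK -mulmxA (mulmxA K^T) -trmx_mul mulVmx // trmx1 mul1mx.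
    exact: mulmxV.
  by have := mulKmx Au (Ki^T *m Ki); rewrite H mulmx1.
have trE : \tr (invmx A *m B) = \tr C.
  by rewrite iA -mulmxA mxtrace_mulC /C.
have dA : 0 < \det A by rewrite detA lt_def sqr_ge0 andbT sqrf_eq0.
rewrite trE detB; split => //; first by rewrite mulr_ge0 // ltW.
by rewrite ler_wpM2l // ltW.
Qed.
Lemma CS (R : rcfType) (I : finType) (w a b : I -> R) : (forall i, 0 <= w i) ->
  (\sum_i w i * a i * b i) ^+ 2 <= (\sum_i w i * a i ^+ 2) * (\sum_i w i * b i ^+ 2).
Proof.
move=> w0.
have dsum (x y : I -> R) : \sum_i \sum_j x i * y j = (\sum_i x i) * (\sum_j y j).
  by rewrite mulr_suml; apply: eq_bigr => i _; rewrite mulr_sumr.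
have sum3 (F G H : I -> R) :
    \sum_i (F i + G i - 2 * H i) = \sum_i F i + \sum_i G i - 2 * \sum_i H i.
  by rewrite sumrB big_split /= mulr_sumr.
have H : 0 <= \sum_i \sum_j w i * w j * (a i * b j - a j * b i) ^+ 2.
  by do 2![apply: sumr_ge0 => ? _]; apply: mulr_ge0; [apply: mulr_ge0 | apply: sqr_ge0].
have E : \sum_i \sum_j w i * w j * (a i * b j - a j * b i) ^+ 2 =
   \sum_i \sum_j ((w i * a i ^+ 2) * (w j * b j ^+ 2) + (w i * b i ^+ 2) * (w j * a j ^+ 2)
     - 2 * ((w i * a i * b i) * (w j * a j * b j))).
  by apply: eq_bigr => i _; apply: eq_bigr => j _; ring.
move: H; rewrite E (eq_bigr _ (fun i _ => sum3 _ _ _)) sum3 !dsum.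
set al := \sum_i _; set ga := \sum_i _; set be := \sum_i _.
rewrite (mulrC ga al) expr2; lra.
Qed.

Lemma rootr_ge0 (R : rcfType) n (x : R) : 0 <= rootr n x.
Proof. by case: n => [|m] //=; exact: (s2valP (sig2W (@rootr_subproof R m x))). Qed.

Lemma rootrK (R : rcfType) n (x : R) : (0 < n)%N -> 0 <= x -> rootr n x ^+ n = x.
Proof.
case: n => // m _ x0; rewrite /rootr.
case: (sig2W (@rootr_subproof R m x)) => y _ /= Hy.
by move: Hy; rewrite x0 => /eqP.
Qed.

Lemma infoM_sym (R : rcfType) p (X : finType) (f : X -> 'cV[R]_p) xi :
  (infoM f xi)^T = infoM f xi.
Proof.
rewrite /infoM linear_sum; apply: eq_bigr => x _.
by rewrite linearZ /= trmx_mul trmxK.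
Qed.

Lemma quad_entry (R : rcfType) p (v : 'cV[R]_p) (A B : 'M[R]_p) :
  (v^T *m (A^T *m B) *m v) 0 0 = \sum_i (A *m v) i 0 * (B *m v) i 0.
Proof.
have -> : v^T *m (A^T *m B) *m v = (A *m v)^T *m (B *m v).
  by rewrite trmx_mul !mulmxA.
by rewrite mxE; apply: eq_bigr => i _; rewrite mxE.
Qed.

Lemma infoM_psd (R : rcfType) p (X : finType) (f : X -> 'cV[R]_p) xi :
  is_design xi -> psd (infoM f xi).
Proof.
move=> [xi0 _]; split; first exact: infoM_sym.
move=> v; rewrite /infoM mulmx_sumr mulmx_suml summxE.
apply: sumr_ge0 => x _; rewrite -scalemxAr -scalemxAl mxE mulr_ge0 //.
have -> : v^T *m (f x *m (f x)^T) *m v = ((f x)^T *m v)^T *m ((f x)^T *m v).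
  by rewrite trmx_mul trmxK !mulmxA.
by rewrite mxE big_ord1 mxE -expr2 sqr_ge0.
Qed.

Lemma trPM (R : rcfType) p (X : finType) (f : X -> 'cV[R]_p) (P : 'M[R]_p) xi :
  \tr (P *m infoM f xi) = \sum_x xi x * ((f x)^T *m P *m f x) 0 0.
Proof.
rewrite /infoM mulmx_sumr linear_sum /=; apply: eq_bigr => x _.
rewrite -scalemxAr mxtraceZ mulmxA mxtrace_mulC mulmxA.
by rewrite /mxtrace big_ord1.
Qed.

Unset Implicit Arguments. Set Strict Implicit.

Theorem mainTheorem5 (R : rcfType) (p : nat) (X : finType) (f : X -> 'cV[R]_p)
  (a eps : R) (S : seq {ffun X -> R}) (xi' : {ffun X -> R}) (t' : R) :
  (0 < p)%N -> 0 < a -> 0 < eps ->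
  S != [::] -> (forall mu, mu \in S -> is_design_plus f mu) ->
  LP_optimal f a S xi' t' ->
  [/\ (forall xi, in_A f a xi -> in_Aprime f a S xi),
      (forall xi, in_A f a xi -> phiD f xi <= t')
    & (is_design_plus f xi' -> phiA f xi' >= a -> t' - phiD f xi' < eps ->
       in_A f a xi' /\
       exists s : R, (forall xi, in_A f a xi -> phiD f xi <= s) /\
                     s - eps < phiD f xi')].
Proof.
move=> p0 a0 eps0 _ Sok [_ opt].
have part1 : forall xi, in_A f a xi -> in_Aprime f a S xi.
  move=> xi [[xid Mu] aA]; split => // mu /Sok [mud Muu].
  set Mm := infoM f mu; set Mx := infoM f xi.
  set P := invmx Mm; set Q := invmx Mx.
  have Psym : P^T = P by rewrite /P trmx_inv infoM_sym.
  have Qsym : Q^T = Q by rewrite /Q trmx_inv infoM_sym.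
  have Ppsd : psd P.
    split => // v.
    have -> : v^T *m P *m v = (P *m v)^T *m Mm *m (P *m v).
      by rewrite trmx_mul Psym -!mulmxA (mulmxA Mm) mulmxV // mul1mx.
    exact: (infoM_psd f mud).2.
  have [dP0 trP0 leP] := psd_det_tr p0 Ppsd.
  have T0 : 0 < \tr P.
    rewrite lt_def trP0 andbT; apply/negP => /eqP T0.
    move: leP; rewrite T0 mul0r expr0n gtn_eqF // => detP.
    have Pu : P \in unitmx by rewrite /P unitmx_inv.
    move: Pu; rewrite unitmxE unitfE => /negP; apply; apply/eqP.
    by apply: le_anti; rewrite detP dP0.
  have Tq0 : 0 < \tr Q.
    by have := lt_le_trans a0 aA; rewrite /phiA div1r invr_gt0.
  have HAsum : \sum_x HA f mu x * xi x
             = (\sum_x xi x * sqnorm (P *m f x)) / \tr P ^+ 2.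
    by rewrite /HA mulr_suml; apply: eq_bigr => x _; rewrite -/Mm -/P; ring.
  have TE : \tr P = \sum_x xi x * \sum_i (Q *m f x) i 0 * (P *m f x) i 0.
    rewrite -[P in LHS]mulmx1 -(mulmxV Mu) -/Mx -/Q mulmxA mxtrace_mulC mulmxA trPM.
    by apply: eq_bigr => x _; rewrite -{1}Qsym quad_entry.
  have TQE : \tr Q = \sum_x xi x * \sum_i (Q *m f x) i 0 ^+ 2.
    rewrite -[Q in LHS]mulmx1 -(mulmxV Mu) -/Mx -/Q mulmxA mxtrace_mulC mulmxA trPM.
    apply: eq_bigr => x _; rewrite -{1}Qsym quad_entry.
    by congr (_ * _); apply: eq_bigr => i _; rewrite expr2.
  have := @CS R (X * 'I_p)%type (fun u => xi u.1)
    (fun u => (Q *m f u.1) u.2 0) (fun u => (P *m f u.1) u.2 0)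
    (fun u => (xid.1 u.1)).
  have E1 : \sum_(u : X * 'I_p) xi u.1 * (Q *m f u.1) u.2 0 * (P *m f u.1) u.2 0
      = \tr P.
    rewrite TE -(pair_bigA _ (fun x i => xi x * (Q *m f x) i 0 * (P *m f x) i 0)) /=; apply: eq_bigr => x _; rewrite mulr_sumr.
    by apply: eq_bigr => i _; rewrite mulrA.
  have E2 : \sum_(u : X * 'I_p) xi u.1 * (Q *m f u.1) u.2 0 ^+ 2 = \tr Q.
    by rewrite TQE -(pair_bigA _ (fun x i => xi x * (Q *m f x) i 0 ^+ 2)) /=; apply: eq_bigr => x _; rewrite mulr_sumr.
  have E3 : \sum_(u : X * 'I_p) xi u.1 * (P *m f u.1) u.2 0 ^+ 2
      = \sum_x xi x * sqnorm (P *m f x).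
    by rewrite -(pair_bigA _ (fun x i => xi x * (P *m f x) i 0 ^+ 2)) /=; apply: eq_bigr => x _; rewrite mulr_sumr.
  rewrite E1 E2 E3 => CSi.
  rewrite HAsum; apply: (le_trans aA); rewrite /phiA.
  have T2 : 0 < \tr P ^+ 2 by rewrite exprn_gt0.
  rewrite ler_pdivlMr // div1r mulrC ler_pdivrMr //.
  by rewrite mulrC.
have part2 : forall xi, in_A f a xi -> phiD f xi <= t'.
  move=> xi xiA; apply: (opt xi (phiD f xi)); split; first exact: part1.
  move=> mu /Sok [mud Muu].
  have [dA dB tr0 le] :=
    det_amgm p0 (infoM_psd f mud) (infoM_psd f xiA.1.1) Muu.
  have HDsum : \sum_x HD f mu x * xi x = rootr p (\det (infoM f mu)) / p%:R *
                 \tr (invmx (infoM f mu) *m infoM f xi).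
    by rewrite trPM mulr_sumr; apply: eq_bigr => x _; rewrite /HD; ring.
  rewrite HDsum /phiD.
  rewrite -(ler_pXn2r p0) ?nnegrE ?rootr_ge0 //; last first.
    by rewrite mulr_ge0 // divr_ge0 ?rootr_ge0 // ler0n.
  rewrite rootrK // mulrAC -mulrA exprMn rootrK //; exact: ltW.
split => // H1 H2 H3.
have xA : in_A f a xi' by split.
split => //; exists t'; split => //.
lra.
Qed.
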